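(* Let $w=a_1\cdots a_n$ be a word over $\{a,b\}$ with $a_1=a_n$. If deleting some $k$ letters from $w$ yields a palindrome, then one can obtain a palindrome by deleting some $l\le k$ letters from $w$ in such a way that the letters $a_1$ and $a_n$ are not deleted.
   Context: A word is a finite word over the two-letter alphabet $\{a,b\}$. A word $w=a_1\cdots a_n$ is a palindrome if $a_i=a_{n-i+1}$ for all $i\le n$. *)

(* Defs.v *)
From HB Require Import structures.
From mathcomp Require Import all_boot.
Set Implicit Arguments. Unset Strict Implicit. Unset Printing Implicit Defensive.

Inductive letter := la | lb.

Definition letter_eqb (x y : letter) : bool :=
  match x, y with la, la | lb, lb => true | _, _ => false end.
Lemma letter_eqP : Equality.axiom letter_eqb.
Proof. by case; case; constructor. Qed.
HB.instance Definition _ := hasDecEq.Build letter letter_eqP.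

Definition word := seq letter.

Definition palindrome (w : word) : Prop :=
  forall i, i < size w -> nth la w i = nth la w (size w - i.+1).

(* A deletion pattern for w: a bit mask of the same length as w; bit i = false
   means the (i+1)-th letter is deleted. *)
Definition deletion (w : word) (m : bitseq) : Prop := size m = size w.
Definition ndeleted (m : bitseq) : nat := count_mem false m.

(* Main.v *)
Require Import Defs.
From mathcomp Require Import all_boot.
From mathcomp Require Import zify.

Lemma pal_rev (p : word) : palindrome p <-> rev p = p.
Proof.
split.
- move=> H; apply: (@eq_from_nth _ la); first by rewrite size_rev.
  move=> i; rewrite size_rev => Hi; by rewrite nth_rev // (H i Hi).
- move=> H i Hi; rewrite -[in LHS]H nth_rev //.
Qed.

Lemma cnt_false (m : bitseq) : count_mem false m = size m - count id m.
Proof.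
rewrite -(count_predC id m) addnC addnK; apply: eq_count; by case.
Qed.

Lemma subseq_tl (T : eqType) (x y : T) s t :
  subseq (x :: s) (y :: t) -> subseq s t.
Proof.
rewrite /=; case: eqP => _ // H.
exact: subseq_trans (subseq_cons s x) H.
Qed.

Lemma mid_pal (c : letter) (v p : word) :
  subseq p (c :: rcons v c) -> rev p = p ->
  exists r : word, [/\ subseq r v, rev r = r & size p <= (size r).+2].
Proof.
case: p => [|x t]; first by exists [::]; rewrite sub0seq.
case/lastP: t => [|r y] Hs Hr.
  by exists [::]; rewrite sub0seq.
exists r; split.
- move/subseq_tl: Hs => Hs.
  rewrite -subseq_rev !rev_rcons in Hs.
  by rewrite -subseq_rev; apply: subseq_tl Hs.
- move: Hr; rewrite rev_cons rev_rcons /= => -[_].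
  by move/rcons_inj => [].
- by rewrite /= size_rcons.
Qed.

Theorem lemma2 (w : word) (k : nat) :
  0 < size w ->
  nth la w 0 = nth la w (size w).-1 ->
  (exists m : bitseq, deletion w m /\ ndeleted m = k /\ palindrome (mask m w)) ->
  exists (l : nat) (m' : bitseq),
    [/\ deletion w m', ndeleted m' = l, l <= k & palindrome (mask m' w)] /\
    nth false m' 0 = true /\ nth false m' (size w).-1 = true.
Proof.
case: w => [|c t] // _.
case/lastP: t => [|v d].
  move=> _ [m [Hm [Hk _]]].
  exists 0, [:: true]; split => //; split => //.
  by move=> [|i] //=.
rewrite /= size_rcons /= nth_rcons ltnn eqxx => <- [m [Hm [Hk Hp]]].
have Hsub : subseq (mask m (c :: rcons v c)) (c :: rcons v c) by apply: mask_subseq.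
have [r [Hr1 Hr2 Hr3]] := @mid_pal _ _ _ Hsub (proj1 (pal_rev _) Hp).
case/subseqP: Hr1 => mm Hmm Hrv.
exists (count_mem false mm), (true :: rcons mm true); split; last first.
  by rewrite /= nth_rcons Hmm ltnn eqxx.
split => //.
- by rewrite /deletion /= !size_rcons Hmm.
- by rewrite /ndeleted /= -cats1 count_cat /= !addn0.
- move: Hr3 Hk; rewrite /ndeleted cnt_false size_mask // Hrv size_mask // Hm /=.
  rewrite cnt_false Hmm size_rcons; have := count_size id mm; rewrite Hmm; move=> H1 H2 H3; set s := size v in H1 H3 *; change (size v) with s in H1; lia.
- Show. rewrite [mask _ _]/= mask_rcons // -Hrv cats1; apply/pal_rev.
  by rewrite rev_cons rev_rcons Hr2.
Qed.
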